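(* Let $f=f^\alpha$ be a developable strip along an arc-length parametrized $C^\infty$ embedded curve $\mathbf c:I\to\mathbb R^3$ with curvature $\kappa>0$, and let $\check f$ be its dual. Let $$S:=\{(t,v)\in\Omega_\epsilon:\ \exists\,(t',v')\in\Omega_\epsilon\setminus\{(t,v)\}\text{ with }\phi_f(t,v)=\psi_f(t',v')\},$$ where $\Omega_\epsilon=I\times(-\epsilon,\epsilon)$. Then for sufficiently small $\epsilon>0$, the set $S$ has no interior points.
   Context: Space curves. For a $C^\infty$ curve $\mathbf c:I\to\mathbb R^3$, $I=[a,b]$, parametrized by arc length with curvature $\kappa=|\mathbf c''|>0$, set $\mathbf e=\mathbf c'$, $\mathbf n=\mathbf c''/\kappa$, $\mathbf b=\mathbf e\times\mathbf n$, and torsion $\tau:=\mathbf n'\cdot\mathbf b$. Developable strips. Given $C^\infty$ functions $\alpha,\beta$ on $I$ with $0<|\alpha(t)|<\pi/2$ and $0<\beta(t)<\pi$, the ruled surface is $f(t,v)=\mathbf c(t)+v\,\xi(t)$, $(t,v)\in I\times(-\epsilon,\epsilon)$, with $\xi=\cos\beta\,\mathbf e+\sin\beta(\cos\alpha\,\mathbf n+\sin\alpha\,\mathbf b)$; $\alpha$ is the first angular function. $f$ is developable iff $\cot\beta=(\alpha'+\tau)/(\kappa\sin\alpha)$; the developable strip with first angular function $\alpha$ is denoted $f^\alpha$. The dual of $f=f^\alpha$ is $\check f:=f^{-\alpha}$. Origami maps. $\phi_f(t,v)=f(t,v)$ for $v\ge0$ and $\phi_f(t,v)=\check f(t,v)$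 for $v<0$; $\psi_f(t,v)=\check f(t,v)$ for $v\ge0$ and $\psi_f(t,v)=f(t,v)$ for $v<0$. *)

(* Defs.v *)
From Stdlib Require Import Reals Lra.
Open Scope R_scope.

Record V3 : Type := mkV3 { vx : R; vy : R; vz : R }.

Definition vadd (u w : V3) : V3 := mkV3 (vx u + vx w) (vy u + vy w) (vz u + vz w).
Definition vscale (k : R) (u : V3) : V3 := mkV3 (k * vx u) (k * vy u) (k * vz u).
Definition vdot (u w : V3) : R := vx u * vx w + vy u * vy w + vz u * vz w.
Definition vcross (u w : V3) : V3 :=
  mkV3 (vy u * vz w - vz u * vy w)
       (vz u * vx w - vx u * vz w)
       (vx u * vy w - vy u * vx w).
Definition vnorm (u : V3) : R := sqrt (vdot u u).

Definition inI (a b t : R) : Prop := a <= t <= b.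

Definition deriv_on (a b : R) (g g' : R -> R) : Prop :=
  forall t, inI a b t ->
  forall eps, 0 < eps -> exists delta, 0 < delta /\
    forall h, h <> 0 -> Rabs h < delta -> inI a b (t + h) ->
      Rabs ((g (t + h) - g t) / h - g' t) < eps.

Definition smooth_on (a b : R) (g : R -> R) : Prop :=
  exists D : nat -> R -> R,
    (forall t, inI a b t -> D O t = g t) /\
    (forall k, deriv_on a b (D k) (D (S k))).

Definition vderiv_on (a b : R) (g g' : R -> V3) : Prop :=
  deriv_on a b (fun t => vx (g t)) (fun t => vx (g' t)) /\
  deriv_on a b (fun t => vy (g t)) (fun t => vy (g' t)) /\
  deriv_on a b (fun t => vz (g t)) (fun t => vz (g' t)).

Definition vsmooth_on (a b : R) (g : R -> V3) : Prop :=
  smooth_on a b (fun t => vx (g t)) /\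
  smooth_on a b (fun t => vy (g t)) /\
  smooth_on a b (fun t => vz (g t)).

(* ---------- Frenet data of the curve ----------
   c1 = c', c2 = c'' (supplied with derivative hypotheses in the theorem) *)
Definition curvature (c2 : R -> V3) (t : R) : R := vnorm (c2 t).
Definition frenet_e (c1 : R -> V3) (t : R) : V3 := c1 t.
Definition frenet_n (c2 : R -> V3) (t : R) : V3 := vscale (/ curvature c2 t) (c2 t).
Definition frenet_b (c1 c2 : R -> V3) (t : R) : V3 :=
  vcross (frenet_e c1 t) (frenet_n c2 t).
(* torsion tau := n' . b, where nd is the derivative of n *)
Definition torsion (c1 c2 nd : R -> V3) (t : R) : R := vdot (nd t) (frenet_b c1 c2 t).

Definition ruling (c1 c2 : R -> V3) (al be : R -> R) (t : R) : V3 :=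
  vadd (vscale (cos (be t)) (frenet_e c1 t))
       (vscale (sin (be t))
          (vadd (vscale (cos (al t)) (frenet_n c2 t))
                (vscale (sin (al t)) (frenet_b c1 c2 t)))).

Definition ruled_surface (c c1 c2 : R -> V3) (al be : R -> R) (t v : R) : V3 :=
  vadd (c t) (vscale v (ruling c1 c2 al be t)).

(* The unique beta in (0,pi) with cot beta = (alpha' + tau)/(kappa sin alpha):
   beta = pi/2 - atan((alpha' + tau)/(kappa sin alpha)). *)
Definition dev_beta (c1 c2 nd : R -> V3) (al ald : R -> R) (t : R) : R :=
  PI / 2 - atan ((ald t + torsion c1 c2 nd t) / (curvature c2 t * sin (al t))).

(* f^alpha : developable strip with first angular function alpha (ald = alpha') *)
Definition dev_strip (c c1 c2 nd : R -> V3) (al ald : R -> R) (t v : R) : V3 :=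
  ruled_surface c c1 c2 al (dev_beta c1 c2 nd al ald) t v.

Definition dual_strip (c c1 c2 nd : R -> V3) (al ald : R -> R) (t v : R) : V3 :=
  dev_strip c c1 c2 nd (fun s => - al s) (fun s => - ald s) t v.

Definition phi_map (c c1 c2 nd : R -> V3) (al ald : R -> R) (t v : R) : V3 :=
  if Rle_dec 0 v then dev_strip c c1 c2 nd al ald t v
  else dual_strip c c1 c2 nd al ald t v.

Definition psi_map (c c1 c2 nd : R -> V3) (al ald : R -> R) (t v : R) : V3 :=
  if Rle_dec 0 v then dual_strip c c1 c2 nd al ald t v
  else dev_strip c c1 c2 nd al ald t v.

Definition in_Omega (a b eps t v : R) : Prop := inI a b t /\ - eps < v < eps.

Definition S_set (a b eps : R) (c c1 c2 nd : R -> V3) (al ald : R -> R) (t v : R) : Prop :=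
  in_Omega a b eps t v /\
  exists t' v', in_Omega a b eps t' v' /\ (t', v') <> (t, v) /\
    phi_map c c1 c2 nd al ald t v = psi_map c c1 c2 nd al ald t' v'.

Definition interior_point (P : R -> R -> Prop) (t v : R) : Prop :=
  exists r, 0 < r /\ forall t' v', sqrt ((t' - t)^2 + (v' - v)^2) < r -> P t' v'.

(* Main.v *)
Require Import Defs.
From Stdlib Require Import Reals.
From Stdlib Require Import Lra Psatz ClassicalEpsilon.
From Coquelicot Require Import Coquelicot.
Open Scope R_scope.

Lemma cp_plus f g x : continuity_pt f x -> continuity_pt g x -> continuity_pt (fun t => f t + g t) x.
Proof. intros; exact (continuity_pt_plus f g x H H0). Qed.
Lemma cp_minus f g x : continuity_pt f x -> continuity_pt g x -> continuity_pt (fun t => f t - g t) x.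
Proof. intros; exact (continuity_pt_minus f g x H H0). Qed.
Lemma cp_mult f g x : continuity_pt f x -> continuity_pt g x -> continuity_pt (fun t => f t * g t) x.
Proof. intros; exact (continuity_pt_mult f g x H H0). Qed.
Lemma cp_opp f x : continuity_pt f x -> continuity_pt (fun t => - f t) x.
Proof. intros; exact (continuity_pt_opp f x H). Qed.
Lemma cp_const (k x : R) : continuity_pt (fun _ => k) x.
Proof. apply continuity_pt_const; intros ? ?; reflexivity. Qed.
Lemma cp_inv f x : continuity_pt f x -> f x <> 0 -> continuity_pt (fun t => / f t) x.
Proof. intros; exact (continuity_pt_inv f x H H0). Qed.
Lemma cp_div f g x : continuity_pt f x -> continuity_pt g x -> g x <> 0 -> continuity_pt (fun t => f t / g t) x.
Proof. intros; exact (continuity_pt_div f g x H H0 H1). Qed.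
Lemma cp_comp f g x : continuity_pt f x -> continuity_pt g (f x) -> continuity_pt (fun t => g (f t)) x.
Proof. intros; exact (continuity_pt_comp f g x H H0). Qed.
Lemma cp_sin f x : continuity_pt f x -> continuity_pt (fun t => sin (f t)) x.
Proof. intros; apply cp_comp; auto; apply continuity_sin. Qed.
Lemma cp_cos f x : continuity_pt f x -> continuity_pt (fun t => cos (f t)) x.
Proof. intros; apply cp_comp; auto; apply continuity_cos. Qed.
Lemma cp_atan f x : continuity_pt f x -> continuity_pt (fun t => atan (f t)) x.
Proof. intros; apply cp_comp; auto; apply derivable_continuous_pt, derivable_pt_atan. Qed.
Lemma cp_abs f x : continuity_pt f x -> continuity_pt (fun t => Rabs (f t)) x.
Proof. intros; apply cp_comp; auto; apply Rcontinuity_abs. Qed.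
Lemma cp_sqrt f x : continuity_pt f x -> 0 <= f x -> continuity_pt (fun t => sqrt (f t)) x.
Proof. intros; apply cp_comp; auto; apply continuity_pt_sqrt; auto. Qed.

Lemma cp_eps f x : (forall eps, 0 < eps -> exists d, 0 < d /\ forall y, Rabs (y - x) < d -> Rabs (f y - f x) < eps) -> continuity_pt f x.
Proof.
  intros H eps Heps. destruct (H eps Heps) as [d [Hd H1]].
  exists d; split; [lra|]. intros y [_ Hy]. simpl in *. unfold R_dist in *. apply H1; auto.
Qed.

Lemma cp_eps_inv f x : continuity_pt f x -> forall eps, 0 < eps -> exists d, 0 < d /\ forall y, Rabs (y - x) < d -> Rabs (f y - f x) < eps.
Proof.
  intros H eps Heps. destruct (H eps Heps) as [d [Hd H1]].
  exists d; split; [lra|]. intros y Hy.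
  destruct (Req_dec x y) as [<-|Hne].
  - rewrite Rminus_diag, Rabs_R0; auto.
  - apply (H1 y); split; [split; [exact I| exact Hne] | exact Hy].
Qed.

Definition vc (F : R -> V3) (x : R) : Prop :=
  continuity_pt (fun t => vx (F t)) x /\ continuity_pt (fun t => vy (F t)) x /\ continuity_pt (fun t => vz (F t)) x.

Lemma vc_add F G x : vc F x -> vc G x -> vc (fun t => vadd (F t) (G t)) x.
Proof. intros [? [? ?]] [? [? ?]]; unfold vadd; repeat split; simpl; apply cp_plus; auto. Qed.
Lemma vc_scale f F x : continuity_pt f x -> vc F x -> vc (fun t => vscale (f t) (F t)) x.
Proof. intros ? [? [? ?]]; unfold vscale; repeat split; simpl; apply cp_mult; auto. Qed.
Lemma vc_cross F G x : vc F x -> vc G x -> vc (fun t => vcross (F t) (G t)) x.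
Proof. intros [? [? ?]] [? [? ?]]; unfold vcross; repeat split; simpl; apply cp_minus; apply cp_mult; auto. Qed.
Lemma cp_dot F G x : vc F x -> vc G x -> continuity_pt (fun t => vdot (F t) (G t)) x.
Proof. intros [? [? ?]] [? [? ?]]; unfold vdot; repeat apply cp_plus; apply cp_mult; auto. Qed.
Lemma vc_ext F G x : (forall t, F t = G t) -> vc F x -> vc G x.
Proof.
  intros E [? [? ?]]; repeat split;
  [ apply (continuity_pt_ext (fun t => vx (F t))) | apply (continuity_pt_ext (fun t => vy (F t))) | apply (continuity_pt_ext (fun t => vz (F t)))];
  auto; intros; rewrite E; auto.
Qed.

Lemma dot_self_nonneg u : 0 <= vdot u u.
Proof. unfold vdot; nra. Qed.

Lemma cp_curv c2 x : vc c2 x -> continuity_pt (fun t => curvature c2 t) x.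
Proof. intros H. unfold curvature, vnorm. apply cp_sqrt. apply cp_dot; auto. apply dot_self_nonneg. Qed.

Lemma vc_n c2 x : vc c2 x -> curvature c2 x <> 0 -> vc (frenet_n c2) x.
Proof. intros H Hk. unfold frenet_n. apply vc_scale; auto. apply cp_inv; auto. apply cp_curv; auto. Qed.

Lemma vc_ruling c1 c2 A B x : vc c1 x -> vc c2 x -> continuity_pt A x -> continuity_pt B x ->
  curvature c2 x <> 0 -> vc (ruling c1 c2 A B) x.
Proof.
  intros H1 H2 HA HB Hk. unfold ruling, frenet_b, frenet_e.
  apply vc_add; apply vc_scale; try apply cp_cos; try apply cp_sin; auto.
  apply vc_add; apply vc_scale; try apply cp_cos; try apply cp_sin; auto.
  - apply vc_n; auto.
  - apply vc_cross; auto. apply vc_n; auto.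
Qed.

Definition clamp (a b t : R) := Rmax a (Rmin b t).
Lemma clamp_in a b t : a <= b -> inI a b (clamp a b t).
Proof. intros; unfold clamp, inI, Rmax, Rmin; repeat destruct Rle_dec; lra. Qed.
Lemma clamp_id a b t : inI a b t -> clamp a b t = t.
Proof. unfold inI; intros; unfold clamp, Rmax, Rmin; repeat destruct Rle_dec; lra. Qed.
Lemma clamp_lip a b x y : a <= b -> Rabs (clamp a b x - clamp a b y) <= Rabs (x - y).
Proof. intros; unfold clamp, Rmax, Rmin; repeat destruct Rle_dec; unfold Rabs; repeat destruct Rcase_abs; lra. Qed.

Lemma deriv_cont a b g g' : a <= b -> deriv_on a b g g' -> forall x, continuity_pt (fun s => g (clamp a b s)) x.
Proof.
  intros Hab H x. apply cp_eps. intros eps Heps.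
  set (t := clamp a b x). assert (Ht : inI a b t) by (apply clamp_in; auto).
  destruct (H t Ht 1 Rlt_0_1) as [d [Hd Hq]].
  set (K := Rabs (g' t) + 1).
  assert (HK : 0 < K) by (unfold K; pose proof (Rabs_pos (g' t)); lra).
  exists (Rmin d (eps / K)). split. { apply Rmin_pos; auto. apply Rdiv_lt_0_compat; auto. }
  intros y Hy. set (s := clamp a b y). fold t.
  assert (Hs : inI a b s) by (apply clamp_in; auto).
  assert (Hl : Rabs (s - t) <= Rabs (y - x)) by (apply clamp_lip; auto).
  assert (Hm1 := Rmin_l d (eps/K)). assert (Hm2 := Rmin_r d (eps/K)).
  destruct (Req_dec (s - t) 0) as [E|E].
  - replace s with t by lra. rewrite Rminus_diag, Rabs_R0; auto.
  - assert (Hq' := Hq (s - t) E ltac:(lra) ltac:(replace (t + (s - t)) with s by ring; auto)).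
    replace (t + (s - t)) with s in Hq' by ring.
    set (Q := (g s - g t) / (s - t)) in *.
    assert (EQ : g s - g t = Q * (s - t)) by (unfold Q; field; auto).
    rewrite EQ, Rabs_mult.
    assert (HQ : Rabs Q <= K).
    { unfold K. pose proof (Rabs_triang (Q - g' t) (g' t)). replace (Q - g' t + g' t) with Q in H0 by ring. lra. }
    assert (Rabs (s - t) < eps / K) by lra.
    apply Rle_lt_trans with (K * Rabs (s - t)).
    + apply Rmult_le_compat_r; auto; apply Rabs_pos.
    + replace eps with (K * (eps / K)) by (field; lra). apply Rmult_lt_compat_l; auto.
Qed.


Definition limw (D : R -> Prop) (Q : R -> R) (L : R) :=
  forall eps, 0 < eps -> exists d, 0 < d /\ forall h, D h -> Rabs h < d -> Rabs (Q h - L) < eps.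

Lemma limw_ext D Q1 Q2 L : (forall h, D h -> Q1 h = Q2 h) -> limw D Q1 L -> limw D Q2 L.
Proof. intros E H eps He. destruct (H eps He) as [d [Hd H1]]. exists d; split; auto.
  intros h Dh Hh. rewrite <- E; auto. Qed.

Lemma limw_const D c : limw D (fun _ => c) c.
Proof. intros eps He; exists 1; split; [lra|]; intros; rewrite Rminus_diag, Rabs_R0; auto. Qed.

Lemma limw_id D : limw D (fun h => h) 0.
Proof. intros eps He; exists eps; split; auto; intros; rewrite Rminus_0_r; auto. Qed.

Lemma limw_plus D Q R1 L M : limw D Q L -> limw D R1 M -> limw D (fun h => Q h + R1 h) (L + M).
Proof.
  intros H1 H2 eps He. destruct (H1 (eps/2)) as [d1 [Hd1 K1]]; [lra|].
  destruct (H2 (eps/2)) as [d2 [Hd2 K2]]; [lra|].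
  exists (Rmin d1 d2); split; [apply Rmin_pos; auto|]. intros h Dh Hh.
  assert (A1 := K1 h Dh ltac:(pose proof (Rmin_l d1 d2); lra)).
  assert (A2 := K2 h Dh ltac:(pose proof (Rmin_r d1 d2); lra)).
  replace (Q h + R1 h - (L + M)) with ((Q h - L) + (R1 h - M)) by ring.
  pose proof (Rabs_triang (Q h - L) (R1 h - M)). lra.
Qed.

Lemma limw_mult D Q R1 L M : limw D Q L -> limw D R1 M -> limw D (fun h => Q h * R1 h) (L * M).
Proof.
  intros H1 H2 eps He.
  set (e1 := eps / (2 * (Rabs M + 1))). set (e2 := eps / (2 * (Rabs L + 2))).
  assert (PM := Rabs_pos M). assert (PL := Rabs_pos L).
  assert (He1 : 0 < e1) by (unfold e1; apply Rdiv_lt_0_compat; lra).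
  assert (He2 : 0 < e2) by (unfold e2; apply Rdiv_lt_0_compat; lra).
  destruct (H1 (Rmin 1 e1)) as [d1 [Hd1 K1]]; [apply Rmin_pos; lra|].
  destruct (H2 e2 He2) as [d2 [Hd2 K2]].
  exists (Rmin d1 d2); split; [apply Rmin_pos; auto|]. intros h Dh Hh.
  assert (A1 := K1 h Dh ltac:(pose proof (Rmin_l d1 d2); lra)).
  assert (A2 := K2 h Dh ltac:(pose proof (Rmin_r d1 d2); lra)).
  assert (B1 : Rabs (Q h - L) < 1) by (pose proof (Rmin_l 1 e1); lra).
  assert (B2 : Rabs (Q h - L) < e1) by (pose proof (Rmin_r 1 e1); lra).
  assert (BQ : Rabs (Q h) <= Rabs L + 1).
  { pose proof (Rabs_triang (Q h - L) L). replace (Q h - L + L) with (Q h) in H by ring. lra. }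
  replace (Q h * R1 h - L * M) with (Q h * (R1 h - M) + M * (Q h - L)) by ring.
  eapply Rle_lt_trans; [apply Rabs_triang|]. rewrite !Rabs_mult.
  assert (T1 : Rabs (Q h) * Rabs (R1 h - M) <= (Rabs L + 1) * e2).
  { apply Rmult_le_compat; auto using Rabs_pos; lra. }
  assert (T2 : Rabs M * Rabs (Q h - L) <= Rabs M * e1).
  { apply Rmult_le_compat_l; auto; lra. }
  assert (E1 : (Rabs L + 1) * e2 < eps / 2).
  { unfold e2. apply Rmult_lt_reg_r with (2 * (Rabs L + 2)); [lra|].
    field_simplify; [|lra]. nra. }
  assert (E2 : Rabs M * e1 < eps / 2).
  { unfold e1. apply Rmult_lt_reg_r with (2 * (Rabs M + 1)); [lra|].
    field_simplify; [|lra]. nra. }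
  lra.
Qed.

Lemma limw_comp D Q L phi : limw D Q L -> continuity_pt phi L -> limw D (fun h => phi (Q h)) (phi L).
Proof.
  intros H Hc eps He. destruct (cp_eps_inv phi L Hc eps He) as [a [Ha Ka]].
  destruct (H a Ha) as [d [Hd Kd]]. exists d; split; auto.
Qed.

Lemma limw_unique D Q A B : (forall d, 0 < d -> exists h, D h /\ Rabs h < d) ->
  limw D Q A -> limw D Q B -> A = B.
Proof.
  intros Hd H1 H2. destruct (Req_dec A B) as [|NE]; auto. exfalso.
  set (e := Rabs (A - B) / 2).
  assert (He : 0 < e) by (unfold e; assert (0 < Rabs (A - B)) by (apply Rabs_pos_lt; lra); lra).
  destruct (H1 e He) as [d1 [Hd1 K1]]. destruct (H2 e He) as [d2 [Hd2 K2]].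
  destruct (Hd (Rmin d1 d2)) as [h [Dh Hh]]; [apply Rmin_pos; auto|].
  assert (A1 := K1 h Dh ltac:(pose proof (Rmin_l d1 d2); lra)).
  assert (A2 := K2 h Dh ltac:(pose proof (Rmin_r d1 d2); lra)).
  pose proof (Rabs_triang (A - Q h) (Q h - B)). replace (A - Q h + (Q h - B)) with (A - B) in H by ring.
  rewrite (Rabs_minus_sym A (Q h)) in H. unfold e in *. lra.
Qed.

Definition DI (a b t h : R) : Prop := h <> 0 /\ inI a b (t + h).

Lemma DI_dense a b t : a < b -> inI a b t -> forall d, 0 < d -> exists h, DI a b t h /\ Rabs h < d.
Proof.
  unfold inI, DI; intros Hab Ht d Hd. destruct (Rlt_dec t b).
  - exists (Rmin (d/2) (b - t)). pose proof (Rmin_l (d/2) (b-t)). pose proof (Rmin_r (d/2) (b-t)).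
    assert (0 < Rmin (d/2) (b-t)) by (apply Rmin_pos; lra).
    rewrite Rabs_pos_eq; [repeat split; lra | lra].
  - exists (- Rmin (d/2) (t - a)). pose proof (Rmin_l (d/2) (t-a)). pose proof (Rmin_r (d/2) (t-a)).
    assert (0 < Rmin (d/2) (t-a)) by (apply Rmin_pos; lra).
    rewrite Rabs_Ropp, Rabs_pos_eq; [repeat split; lra | lra].
Qed.

Lemma deriv_limw a b g g' t : deriv_on a b g g' -> inI a b t ->
  limw (DI a b t) (fun h => (g (t + h) - g t) / h) (g' t).
Proof. intros H Ht eps He. destruct (H t Ht eps He) as [d [Hd K]]. exists d; split; auto.
  intros h [H1 H2] Hh. apply K; auto. Qed.

Lemma deriv_limw_cont a b g g' t : deriv_on a b g g' -> inI a b t ->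
  limw (DI a b t) (fun h => g (t + h)) (g t).
Proof.
  intros H Ht. apply limw_ext with (fun h => g t + h * ((g (t + h) - g t) / h)).
  { intros h [Hh _]. field; auto. }
  pose proof (limw_plus _ _ _ _ _ (limw_const (DI a b t) (g t))
     (limw_mult _ _ _ _ _ (limw_id (DI a b t)) (deriv_limw a b g g' t H Ht))) as L.
  simpl in L. replace (g t + 0 * g' t) with (g t) in L by ring. exact L.
Qed.

Lemma deriv_unique a b g g1 g2 t : a < b -> deriv_on a b g g1 -> deriv_on a b g g2 -> inI a b t -> g1 t = g2 t.
Proof.
  intros Hab H1 H2 Ht. apply (limw_unique (DI a b t) (fun h => (g (t+h) - g t)/h)).
  - apply DI_dense; auto.
  - exact (deriv_limw a b g g1 t H1 Ht).
  - exact (deriv_limw a b g g2 t H2 Ht).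
Qed.

Lemma deriv_ext a b g h g' : deriv_on a b g g' -> (forall t, inI a b t -> g t = h t) -> deriv_on a b h g'.
Proof. intros H E t Ht eps He. destruct (H t Ht eps He) as [d [Hd K]]. exists d; split; auto.
  intros x Hx Hx2 Hx3. rewrite <- !E; auto. Qed.

Lemma deriv_ext' a b g g1 g2 : deriv_on a b g g1 -> (forall t, inI a b t -> g1 t = g2 t) -> deriv_on a b g g2.
Proof. intros H E t Ht eps He. destruct (H t Ht eps He) as [d [Hd K]]. exists d; split; auto.
  intros x Hx Hx2 Hx3. rewrite <- !E; auto. Qed.

Lemma limw_unique2 D Q1 Q2 A B : (forall d, 0 < d -> exists h, D h /\ Rabs h < d) ->
  limw D Q1 A -> limw D Q2 B -> (forall h, D h -> Q1 h = Q2 h) -> A = B.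
Proof. intros Hd H1 H2 E. apply (limw_unique D Q2); auto. apply limw_ext with Q1; auto. Qed.


Definition N1 (u : V3) : R := Rabs (vx u) + Rabs (vy u) + Rabs (vz u).
Definition cb (K : R) (u : V3) : Prop := Rabs (vx u) <= K /\ Rabs (vy u) <= K /\ Rabs (vz u) <= K.

Lemma N1_pos u : 0 <= N1 u.
Proof. unfold N1; pose proof (Rabs_pos (vx u)); pose proof (Rabs_pos (vy u)); pose proof (Rabs_pos (vz u)); lra. Qed.

Lemma abs_mul_le x y K : Rabs x <= K -> Rabs (x * y) <= K * Rabs y.
Proof. intros; rewrite Rabs_mult; apply Rmult_le_compat_r; auto; apply Rabs_pos. Qed.

Lemma dot_bound K u y : cb K u -> Rabs (vdot u y) <= K * N1 y.
Proof.
  intros [H1 [H2 H3]]. unfold vdot, N1.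
  pose proof (abs_mul_le _ (vx y) _ H1). pose proof (abs_mul_le _ (vy y) _ H2). pose proof (abs_mul_le _ (vz y) _ H3).
  pose proof (Rabs_triang (vx u * vx y + vy u * vy y) (vz u * vz y)).
  pose proof (Rabs_triang (vx u * vx y) (vy u * vy y)). lra.
Qed.

Lemma unit_cb u : vdot u u = 1 -> cb 1 u.
Proof.
  unfold vdot, cb; intros H. repeat split; apply Rabs_le; nra.
Qed.

Lemma cross_cb u w : cb 1 u -> cb 1 w -> cb 2 (vcross u w).
Proof.
  intros [H1 [H2 H3]] [G1 [G2 G3]]. unfold cb, vcross; simpl.
  repeat split; unfold Rminus; eapply Rle_trans; try apply Rabs_triang; rewrite ?Rabs_Ropp, !Rabs_mult;
  (assert (forall p q r s, 0 <= p -> 0 <= q -> 0 <= r -> 0<= s -> p <= 1 -> q <= 1 -> r <= 1 -> s <= 1 -> p*q + r*s <= 2) by (intros; nra));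
  apply H; auto using Rabs_pos.
Qed.

Lemma cross_N1 u y : cb 1 u -> N1 (vcross u y) <= 2 * N1 y.
Proof.
  intros [H1 [H2 H3]]. unfold N1, vcross; simpl.
  assert (forall p q r s, Rabs p <= 1 -> Rabs r <= 1 -> Rabs (p * q - r * s) <= Rabs q + Rabs s).
  { intros. unfold Rminus. eapply Rle_trans; [apply Rabs_triang|]. rewrite Rabs_Ropp, !Rabs_mult.
    pose proof (Rabs_pos q); pose proof (Rabs_pos s); pose proof (Rabs_pos p); pose proof (Rabs_pos r). nra. }
  pose proof (H (vy u) (vz y) (vz u) (vy y) H2 H3).
  pose proof (H (vz u) (vx y) (vx u) (vz y) H3 H1).
  pose proof (H (vx u) (vy y) (vy u) (vx y) H1 H2). lra.
Qed.

Definition rul (e n : V3) (A S C Z : R) : V3 :=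
  vadd (vscale A e) (vscale S (vadd (vscale C n) (vscale Z (vcross e n)))).

Section Frame.
Variables (e n : V3).
Hypotheses (Hee : vdot e e = 1) (Hnn : vdot n n = 1) (Hen : vdot e n = 0).

Lemma frame_XX A S C Z : vdot (rul e n A S C Z) (rul e n A S C Z) = A^2 + S^2 * (C^2 + Z^2).
Proof.
  assert (I : vdot (rul e n A S C Z) (rul e n A S C Z) =
     A^2 * vdot e e + 2 * A * S * C * vdot e n + S^2 * C^2 * vdot n n
     + S^2 * Z^2 * (vdot e e * vdot n n - (vdot e n)^2)).
  { destruct e, n; unfold rul, vdot, vadd, vscale, vcross; simpl; ring. }
  rewrite I, Hee, Hnn, Hen; ring.
Qed.

Lemma frame_eX A S C Z : vdot e (rul e n A S C Z) = A.
Proof.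
  assert (I : vdot e (rul e n A S C Z) = A * vdot e e + S * C * vdot e n).
  { destruct e, n; unfold rul, vdot, vadd, vscale, vcross; simpl; ring. }
  rewrite I, Hee, Hen; ring.
Qed.

Lemma lagrange u w : vdot (vcross u w) (vcross u w) = vdot u u * vdot w w - (vdot u w)^2.
Proof. destruct u, w; unfold vdot, vcross; simpl; ring. Qed.

Lemma frame_triple A S C Z A' S' C' Z' :
  vdot (vcross e (rul e n A S C Z)) (rul e n A' S' C' Z') = S * C * S' * Z' - S * Z * S' * C'.
Proof.
  assert (I : vdot (vcross e (rul e n A S C Z)) (rul e n A' S' C' Z') =
     (S * C * S' * Z' - S * Z * S' * C') * (vdot e e * vdot n n - (vdot e n)^2)).
  { destruct e, n; unfold rul, vdot, vadd, vscale, vcross; simpl; ring. }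
  rewrite I, Hee, Hnn, Hen; ring.
Qed.
End Frame.


Definition lin3 (s : R) (E : V3) (p : R) (W : V3) (q : R) (U : V3) : V3 :=
  mkV3 (s * vx E + p * vx W - q * vx U) (s * vy E + p * vy W - q * vy U) (s * vz E + p * vz W - q * vz U).

Lemma transversal E U W s p q m2 th :
  cb 1 E -> cb 1 U -> cb 1 W -> m2 <= Rabs (vdot (vcross E U) W) -> 0 < m2 -> 0 <= th -> 4 * th < m2 ->
  N1 (lin3 s E p W q U) <= th * (Rabs s + Rabs p) -> s = 0 /\ p = 0 /\ q = 0.
Proof.
  intros HE HU HW HD Hm Hth Hth2 HN.
  set (y := lin3 s E p W q U) in *. set (D := vdot (vcross E U) W) in *.
  assert (I1 : vdot (vcross U W) y = s * D) by (unfold y, D; destruct E, U, W; unfold vdot, vcross, lin3; simpl; ring).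
  assert (I2 : vdot (vcross E U) y = p * D) by (unfold y, D; destruct E, U, W; unfold vdot, vcross, lin3; simpl; ring).
  assert (I3 : vdot (vcross W E) y = - q * D) by (unfold y, D; destruct E, U, W; unfold vdot, vcross, lin3; simpl; ring).
  pose proof (dot_bound 2 _ y (cross_cb _ _ HU HW)) as B1.
  pose proof (dot_bound 2 _ y (cross_cb _ _ HE HU)) as B2.
  pose proof (dot_bound 2 _ y (cross_cb _ _ HW HE)) as B3.
  rewrite I1, Rabs_mult in B1. rewrite I2, Rabs_mult in B2. rewrite I3, Rabs_mult, Rabs_Ropp in B3.
  pose proof (N1_pos y). pose proof (Rabs_pos s). pose proof (Rabs_pos p). pose proof (Rabs_pos q).
  assert (Z : Rabs s + Rabs p <= 0).
  { assert (Rabs s * m2 <= Rabs s * Rabs D) by (apply Rmult_le_compat_l; auto).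
    assert (Rabs p * m2 <= Rabs p * Rabs D) by (apply Rmult_le_compat_l; auto).
    nra. }
  assert (Hs : s = 0) by (destruct (Req_dec s 0); auto; pose proof (Rabs_pos_lt s H3); lra).
  assert (Hp : p = 0) by (destruct (Req_dec p 0); auto; pose proof (Rabs_pos_lt p H3); lra).
  assert (N1 y <= 0) by (rewrite Hs, Hp, Rabs_R0 in HN; lra).
  assert (Rabs q * Rabs D <= 0) by nra.
  assert (Hq0 : Rabs q <= 0) by nra.
  split; auto. split; auto. destruct (Req_dec q 0) as [|Hq]; auto; pose proof (Rabs_pos_lt q Hq); lra.
Qed.

Lemma embedding E U s p q m1 th :
  cb 1 E -> cb 1 U -> vdot E E = 1 -> Rabs (vdot E U) <= 1 -> m1 <= vdot (vcross E U) (vcross E U) -> 0 < m1 -> 0 <= th ->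
  (m1 + 8) * th < m1 -> (p < 0 <= q \/ q < 0 <= p) ->
  N1 (lin3 s E p U q U) <= th * (Rabs s + Rabs p) -> False.
Proof.
  intros HE HU HEE HEU HG Hm Hth Hth2 Hsg HN.
  set (y := lin3 s E p U q U) in *. set (G := vdot (vcross E U) (vcross E U)) in *.
  assert (I1 : vdot (vcross E U) (vcross E y) = (p - q) * G) by (unfold y, G; destruct E, U; unfold vdot, vcross, lin3; simpl; ring).
  assert (I2 : vdot E y = s * vdot E E + (p - q) * vdot E U) by (unfold y; destruct E, U; unfold vdot, lin3; simpl; ring).
  rewrite HEE, Rmult_1_r in I2.
  pose proof (dot_bound 2 (vcross E U) (vcross E y) (cross_cb _ _ HE HU)) as B1.
  pose proof (cross_N1 E y HE) as B2.
  pose proof (dot_bound 1 E y HE) as B3.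
  rewrite I1, Rabs_mult, (Rabs_pos_eq G) in B1 by (unfold G; apply dot_self_nonneg).
  rewrite I2 in B3.
  pose proof (N1_pos y). pose proof (Rabs_pos s). pose proof (Rabs_pos (p - q)). pose proof (Rabs_pos p).
  assert (Hpq : Rabs p <= Rabs (p - q)) by (unfold Rabs; repeat destruct Rcase_abs; lra).
  assert (A1 : m1 * Rabs (p - q) <= 4 * N1 y).
  { assert (Rabs (p - q) * m1 <= Rabs (p - q) * G) by (apply Rmult_le_compat_l; auto). lra. }
  assert (A2 : Rabs s <= N1 y + Rabs (p - q)).
  { assert (T1 : Rabs (s + (p - q) * vdot E U) >= Rabs s - Rabs ((p - q) * vdot E U)).
    { pose proof (Rabs_triang (s + (p - q) * vdot E U) (- ((p - q) * vdot E U))) as T2.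
      rewrite Rabs_Ropp in T2. replace (s + (p - q) * vdot E U + - ((p - q) * vdot E U)) with s in T2 by ring. lra. }
    rewrite Rabs_mult in T1. assert (Rabs (p - q) * Rabs (vdot E U) <= Rabs (p - q) * 1) by (apply Rmult_le_compat_l; [apply Rabs_pos| exact HEU]). lra. }
  set (Zz := Rabs s + Rabs (p - q)).
  assert (A3 : m1 * Zz <= (m1 + 8) * N1 y).
  { unfold Zz. assert (m1 * Rabs s <= m1 * (N1 y + Rabs (p - q))) by (apply Rmult_le_compat_l; lra). lra. }
  assert (A4 : N1 y <= th * Zz).
  { unfold Zz. assert (th * Rabs p <= th * Rabs (p - q)) by (apply Rmult_le_compat_l; lra). lra. }
  assert (Zp : 0 <= Zz) by (unfold Zz; lra).
  assert (A5 : Zz <= 0).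
  { assert ((m1 + 8) * N1 y <= (m1 + 8) * (th * Zz)) by (apply Rmult_le_compat_l; lra).
    assert (Zz * (m1 - (m1 + 8) * th) <= 0) by lra.
    destruct (Rle_dec Zz 0); auto. assert (0 < Zz * (m1 - (m1 + 8) * th)) by (apply Rmult_lt_0_compat; lra). lra. }
  assert (Rabs (p - q) <= 0) by (unfold Zz in A5; lra).
  assert (p = q) by (destruct (Req_dec (p - q) 0) as [Hz|Hz]; [lra| pose proof (Rabs_pos_lt _ Hz); lra]).
  lra.
Qed.


Section Main.
Variables (a b : R) (c c1 c2 nd : R -> V3) (al ald : R -> R) (c3x c3y c3z c4x c4y c4z ald2 : R -> R).
Hypotheses (Hab : a < b)
  (Hc1 : vderiv_on a b c c1) (Hc2 : vderiv_on a b c1 c2)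
  (Hc3x : deriv_on a b (fun t => vx (c2 t)) c3x)
  (Hc3y : deriv_on a b (fun t => vy (c2 t)) c3y)
  (Hc3z : deriv_on a b (fun t => vz (c2 t)) c3z)
  (Hc4x : deriv_on a b c3x c4x) (Hc4y : deriv_on a b c3y c4y) (Hc4z : deriv_on a b c3z c4z)
  (Harc : forall t, inI a b t -> vnorm (c1 t) = 1)
  (Hkappa : forall t, inI a b t -> 0 < curvature c2 t)
  (Hnd : vderiv_on a b (frenet_n c2) nd)
  (Hemb : forall t t', inI a b t -> inI a b t' -> c t = c t' -> t = t')
  (Hald : deriv_on a b al ald) (Haldd : deriv_on a b ald ald2)
  (Hal_range : forall t, inI a b t -> 0 < Rabs (al t) < PI / 2).

Definition c3 (t : R) : V3 := mkV3 (c3x t) (c3y t) (c3z t).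

Lemma ee t : inI a b t -> vdot (c1 t) (c1 t) = 1.
Proof.
  intros Ht. pose proof (Harc t Ht) as H. unfold vnorm in H.
  rewrite <- (sqrt_sqrt (vdot (c1 t) (c1 t))) by apply dot_self_nonneg. rewrite H; ring.
Qed.

Lemma kk t : inI a b t -> vdot (c2 t) (c2 t) = curvature c2 t * curvature c2 t.
Proof. intros; unfold curvature, vnorm; rewrite sqrt_sqrt; auto; apply dot_self_nonneg. Qed.

Lemma e_c2 t : inI a b t -> vdot (c1 t) (c2 t) = 0.
Proof.
  intros Ht. destruct Hc2 as [Hx [Hy Hz]].
  pose proof (limw_mult _ _ _ _ _ (limw_plus _ _ _ _ _ (deriv_limw_cont _ _ _ _ t Hx Ht) (limw_const (DI a b t) (vx (c1 t)))) (deriv_limw _ _ _ _ t Hx Ht)) as Lx.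
  pose proof (limw_mult _ _ _ _ _ (limw_plus _ _ _ _ _ (deriv_limw_cont _ _ _ _ t Hy Ht) (limw_const (DI a b t) (vy (c1 t)))) (deriv_limw _ _ _ _ t Hy Ht)) as Ly.
  pose proof (limw_mult _ _ _ _ _ (limw_plus _ _ _ _ _ (deriv_limw_cont _ _ _ _ t Hz Ht) (limw_const (DI a b t) (vz (c1 t)))) (deriv_limw _ _ _ _ t Hz Ht)) as Lz.
  pose proof (limw_plus _ _ _ _ _ (limw_plus _ _ _ _ _ Lx Ly) Lz) as L.
  assert (L0 : limw (DI a b t) (fun h => ((fun h0 : R => (fun h1 : R => (fun h2 : R => vx (c1 (t + h2)) + vx (c1 t)) h1 * (fun h2 : R => (vx (c1 (t + h2)) - vx (c1 t)) / h2) h1) h0 + (fun h1 : R => (fun h2 : R => vy (c1 (t + h2)) + vy (c1 t)) h1 * (fun h2 : R => (vy (c1 (t + h2)) - vy (c1 t)) / h2) h1) h0) h + (fun h0 : R => (fun h1 : R => vz (c1 (t + h1)) + vz (c1 t)) h0 * (fun h1 : R => (vz (c1 (t + h1)) - vz (c1 t)) / h1) h0) h)) 0).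
  { apply limw_ext with (fun _ => 0); [|apply limw_const].
    intros h [Hh0 Hh]. simpl.
    pose proof (ee _ Hh) as E1. pose proof (ee _ Ht) as E0. unfold vdot in E1, E0.
    transitivity (((vx (c1 (t + h)) * vx (c1 (t + h)) + vy (c1 (t + h)) * vy (c1 (t + h)) + vz (c1 (t + h)) * vz (c1 (t + h))) - (vx (c1 t) * vx (c1 t) + vy (c1 t) * vy (c1 t) + vz (c1 t) * vz (c1 t))) / h).
    - rewrite E1, E0. unfold Rdiv; ring.
    - field; auto. }
  pose proof (limw_unique _ _ _ _ (DI_dense a b t Hab Ht) L L0) as U.
  unfold vdot. lra.
Qed.

Lemma torsion_eq t : inI a b t -> vdot (c3 t) (frenet_b c1 c2 t) = curvature c2 t * torsion c1 c2 nd t.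
Proof.
  intros Ht. destruct Hnd as [Nx [Ny Nz]]. set (bb := frenet_b c1 c2 t).
  pose proof (limw_plus _ _ _ _ _ (limw_plus _ _ _ _ _
     (limw_mult _ _ _ _ _ (limw_const (DI a b t) (vx bb)) (deriv_limw _ _ _ _ t Hc3x Ht))
     (limw_mult _ _ _ _ _ (limw_const (DI a b t) (vy bb)) (deriv_limw _ _ _ _ t Hc3y Ht)))
     (limw_mult _ _ _ _ _ (limw_const (DI a b t) (vz bb)) (deriv_limw _ _ _ _ t Hc3z Ht))) as L1.
  pose proof (limw_plus _ _ _ _ _ (limw_plus _ _ _ _ _
     (limw_mult _ _ _ _ _ (deriv_limw_cont _ _ _ _ t Hc3x Ht) (deriv_limw_cont _ _ _ _ t Hc3x Ht))
     (limw_mult _ _ _ _ _ (deriv_limw_cont _ _ _ _ t Hc3y Ht) (deriv_limw_cont _ _ _ _ t Hc3y Ht)))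
     (limw_mult _ _ _ _ _ (deriv_limw_cont _ _ _ _ t Hc3z Ht) (deriv_limw_cont _ _ _ _ t Hc3z Ht))) as K0.
  pose proof (limw_comp _ _ _ sqrt K0 (continuity_pt_sqrt _ (dot_self_nonneg (c2 t)))) as K.
  pose proof (limw_plus _ _ _ _ _ (limw_plus _ _ _ _ _
     (limw_mult _ _ _ _ _ (limw_const (DI a b t) (vx bb)) (deriv_limw _ _ _ _ t Nx Ht))
     (limw_mult _ _ _ _ _ (limw_const (DI a b t) (vy bb)) (deriv_limw _ _ _ _ t Ny Ht)))
     (limw_mult _ _ _ _ _ (limw_const (DI a b t) (vz bb)) (deriv_limw _ _ _ _ t Nz Ht))) as P.
  pose proof (limw_mult _ _ _ _ _ K P) as L2.
  pose proof (limw_unique2 _ _ _ _ _ (DI_dense a b t Hab Ht) L1 L2) as U.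
  unfold torsion. fold bb. transitivity (vx bb * c3x t + vy bb * c3y t + vz bb * c3z t).
  { unfold vdot, c3; simpl; ring. }
  rewrite U.
  - unfold curvature, vnorm, vdot. ring.
  - intros h [Hh0 Hh].
    assert (k1 := Hkappa _ Hh). assert (k0 := Hkappa _ Ht).
    assert (bn : vx bb * vx (c2 t) + vy bb * vy (c2 t) + vz bb * vz (c2 t) = 0).
    { unfold bb, frenet_b, frenet_e, frenet_n, vscale, vcross; simpl. ring. }
    clearbody bb. simpl. unfold frenet_n, vscale; simpl.
    change (sqrt (vdot (c2 (t + h)) (c2 (t + h)))) with (curvature c2 (t + h)).
    set (K1 := curvature c2 (t + h)) in *. set (K0' := curvature c2 t) in *.
    assert (EK : sqrt (vx (c2 (t + h)) * vx (c2 (t + h)) + vy (c2 (t + h)) * vy (c2 (t + h)) + vz (c2 (t + h)) * vz (c2 (t + h))) = K1) by reflexivity.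
    rewrite EK.
    apply Rminus_diag_uniq.
    transitivity ((K1 / K0' - 1) / h * (vx bb * vx (c2 t) + vy bb * vy (c2 t) + vz bb * vz (c2 t))).
    + field. repeat split; lra.
    + rewrite bn. ring.
Qed.

Definition tauF t := vdot (c3 t) (frenet_b c1 c2 t) / curvature c2 t.
Definition betaF (A Ad : R -> R) t := PI / 2 - atan ((Ad t + tauF t) / (curvature c2 t * sin (A t))).

Lemma beta_eq A Ad t : inI a b t -> dev_beta c1 c2 nd A Ad t = betaF A Ad t.
Proof.
  intros Ht. unfold dev_beta, betaF, tauF. rewrite torsion_eq by auto.
  assert (k := Hkappa t Ht).
  replace (curvature c2 t * torsion c1 c2 nd t / curvature c2 t) with (torsion c1 c2 nd t) by (field; lra).
  reflexivity.
Qed.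

Let cl := clamp a b.
Let Hab' : a <= b. Proof. lra. Qed.

Lemma vc_c1 x : vc (fun s => c1 (cl s)) x.
Proof. destruct Hc2 as [Hx [Hy Hz]]. repeat split.
  exact (deriv_cont a b _ _ Hab' Hx x). exact (deriv_cont a b _ _ Hab' Hy x). exact (deriv_cont a b _ _ Hab' Hz x). Qed.
Lemma vc_c2 x : vc (fun s => c2 (cl s)) x.
Proof. repeat split.
  exact (deriv_cont a b _ _ Hab' Hc3x x). exact (deriv_cont a b _ _ Hab' Hc3y x). exact (deriv_cont a b _ _ Hab' Hc3z x). Qed.
Lemma vc_c3 x : vc (fun s => c3 (cl s)) x.
Proof. repeat split.
  exact (deriv_cont a b _ _ Hab' Hc4x x). exact (deriv_cont a b _ _ Hab' Hc4y x). exact (deriv_cont a b _ _ Hab' Hc4z x). Qed.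
Lemma vc_c x : vc (fun s => c (cl s)) x.
Proof. destruct Hc1 as [Hx [Hy Hz]]. repeat split.
  exact (deriv_cont a b _ _ Hab' Hx x). exact (deriv_cont a b _ _ Hab' Hy x). exact (deriv_cont a b _ _ Hab' Hz x). Qed.
Lemma cp_al x : continuity_pt (fun s => al (cl s)) x.
Proof. exact (deriv_cont a b _ _ Hab' Hald x). Qed.
Lemma cp_ald x : continuity_pt (fun s => ald (cl s)) x.
Proof. exact (deriv_cont a b _ _ Hab' Haldd x). Qed.

Lemma cl_in s : inI a b (cl s).
Proof. apply clamp_in; auto. Qed.
Lemma kcl s : curvature c2 (cl s) <> 0.
Proof. pose proof (Hkappa _ (cl_in s)); lra. Qed.

Lemma vc_b x : vc (fun s => frenet_b c1 c2 (cl s)) x.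
Proof.
  unfold frenet_b, frenet_e. apply vc_cross. apply vc_c1.
  exact (vc_n (fun s => c2 (cl s)) x (vc_c2 x) (kcl x)).
Qed.

Lemma vc_X (A Ad : R -> R) (HA : forall x, continuity_pt (fun s => A (cl s)) x)
  (HAd : forall x, continuity_pt (fun s => Ad (cl s)) x) (HsA : forall t, inI a b t -> sin (A t) <> 0) x :
  vc (fun s => ruling c1 c2 A (dev_beta c1 c2 nd A Ad) (cl s)) x.
Proof.
  apply vc_ext with (fun s => ruling (fun u => c1 (cl u)) (fun u => c2 (cl u)) (fun u => A (cl u)) (fun u => betaF A Ad (cl u)) s).
  { intros s. unfold ruling. rewrite (beta_eq A Ad (cl s) (cl_in s)). reflexivity. }
  apply vc_ruling; auto using vc_c1, vc_c2.
  2: exact (kcl x).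
  unfold betaF, tauF. apply cp_minus; [apply cp_const|]. apply cp_atan. apply cp_div.
  - apply cp_plus; auto. apply cp_div.
    + apply cp_dot. apply vc_c3. apply vc_b.
    + exact (cp_curv _ x (vc_c2 x)).
    + apply kcl.
  - apply cp_mult. exact (cp_curv _ x (vc_c2 x)). apply cp_sin; auto.
  - apply Rmult_integral_contrapositive; split. apply kcl. apply HsA, cl_in.
Qed.

Definition Rf (A Ad : R -> R) (t : R) : V3 := ruling c1 c2 A (dev_beta c1 c2 nd A Ad) t.

Lemma sin_al t : inI a b t -> sin (al t) <> 0 /\ 0 < cos (al t).
Proof.
  intros Ht. pose proof (Hal_range t Ht) as [H1 H2]. pose proof PI_RGT_0.
  assert (- (PI/2) < al t < PI/2) by (unfold Rabs in H2; destruct Rcase_abs; lra).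
  split; [|apply cos_gt_0; lra].
  destruct (Rlt_dec 0 (al t)).
  - pose proof (sin_gt_0 (al t) r ltac:(lra)); lra.
  - assert (al t < 0) by (unfold Rabs in H1; destruct Rcase_abs; lra).
    pose proof (sin_gt_0 (- al t) ltac:(lra) ltac:(lra)). rewrite sin_neg in H4; lra.
Qed.

Lemma nn t : inI a b t -> vdot (frenet_n c2 t) (frenet_n c2 t) = 1.
Proof.
  intros Ht. pose proof (kk t Ht) as K. pose proof (Hkappa t Ht).
  unfold frenet_n, vscale, vdot in *; simpl.
  transitivity ((/ curvature c2 t) ^ 2 * (vx (c2 t) * vx (c2 t) + vy (c2 t) * vy (c2 t) + vz (c2 t) * vz (c2 t))); [ring|].
  rewrite K. field. lra.
Qed.

Lemma en t : inI a b t -> vdot (c1 t) (frenet_n c2 t) = 0.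
Proof.
  intros Ht. pose proof (e_c2 t Ht) as K. unfold frenet_n, vscale, vdot in *; simpl.
  transitivity (/ curvature c2 t * (vx (c1 t) * vx (c2 t) + vy (c1 t) * vy (c2 t) + vz (c1 t) * vz (c2 t))); [ring|].
  rewrite K. ring.
Qed.

Lemma Rf_rul A Ad t : Rf A Ad t = rul (c1 t) (frenet_n c2 t) (cos (dev_beta c1 c2 nd A Ad t)) (sin (dev_beta c1 c2 nd A Ad t)) (cos (A t)) (sin (A t)).
Proof. reflexivity. Qed.

Lemma RR A Ad t : inI a b t -> vdot (Rf A Ad t) (Rf A Ad t) = 1.
Proof.
  intros Ht. rewrite Rf_rul, frame_XX by auto using ee, nn, en.
  pose proof (sin2_cos2 (A t)). pose proof (sin2_cos2 (dev_beta c1 c2 nd A Ad t)). unfold Rsqr in *.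
  nra.
Qed.

Lemma eR A Ad t : inI a b t -> vdot (c1 t) (Rf A Ad t) = cos (dev_beta c1 c2 nd A Ad t).
Proof. intros Ht. rewrite Rf_rul, frame_eX by auto using ee, nn, en. reflexivity. Qed.

Lemma ER A Ad t : inI a b t -> vdot (vcross (c1 t) (Rf A Ad t)) (vcross (c1 t) (Rf A Ad t)) = (sin (dev_beta c1 c2 nd A Ad t))^2.
Proof.
  intros Ht. rewrite lagrange, ee, RR, eR by auto.
  pose proof (sin2_cos2 (dev_beta c1 c2 nd A Ad t)). unfold Rsqr in *. nra.
Qed.

Lemma sinb_pos A Ad t : 0 < sin (dev_beta c1 c2 nd A Ad t).
Proof.
  unfold dev_beta. match goal with |- context [atan ?u] => pose proof (atan_bound u) end.
  pose proof PI_RGT_0. apply sin_gt_0; lra.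
Qed.

Definition Xf := Rf al ald.
Definition Yf := Rf (fun s => - al s) (fun s => - ald s).

Lemma triple t : inI a b t -> vdot (vcross (c1 t) (Xf t)) (Yf t) =
  - 2 * sin (dev_beta c1 c2 nd al ald t) * sin (dev_beta c1 c2 nd (fun s => - al s) (fun s => - ald s) t) * sin (al t) * cos (al t).
Proof.
  intros Ht. unfold Xf, Yf. rewrite !Rf_rul, frame_triple by auto using ee, nn, en.
  rewrite sin_neg, cos_neg. ring.
Qed.

Lemma vc_Xf x : vc (fun s => Xf (cl s)) x.
Proof.
  apply (vc_X al ald cp_al cp_ald). intros t Ht; apply sin_al; auto.
Qed.
Lemma vc_Yf x : vc (fun s => Yf (cl s)) x.
Proof.
  apply (vc_X (fun s => - al s) (fun s => - ald s)).
  - intros; apply cp_opp, cp_al.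
  - intros; apply cp_opp, cp_ald.
  - intros t Ht. rewrite sin_neg. pose proof (sin_al t Ht); lra.
Qed.

Lemma min_pos (g : R -> R) : (forall x, continuity_pt g x) -> (forall t, inI a b t -> 0 < g t) ->
  exists m, 0 < m /\ forall t, inI a b t -> m <= g t.
Proof.
  intros Hc Hp. destruct (continuity_ab_min g a b Hab' (fun x _ => Hc x)) as [M [HM1 HM2]].
  exists (g M); split; [apply Hp; exact HM2| intros t Ht; apply HM1; exact Ht].
Qed.

Lemma lowers : exists m1 m2, 0 < m1 /\ 0 < m2 /\ forall t, inI a b t ->
  m1 <= vdot (vcross (c1 t) (Xf t)) (vcross (c1 t) (Xf t)) /\ m1 <= vdot (vcross (c1 t) (Yf t)) (vcross (c1 t) (Yf t)) /\ m2 <= Rabs (vdot (vcross (c1 t) (Xf t)) (Yf t)).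
Proof.
  destruct (min_pos (fun x => vdot (vcross (c1 (cl x)) (Xf (cl x))) (vcross (c1 (cl x)) (Xf (cl x))))) as [mx [Hmx Kx]].
  { intros x. apply cp_dot; apply vc_cross; auto using vc_c1, vc_Xf. }
  { intros t Ht. unfold Xf. rewrite ER by apply cl_in. pose proof (sinb_pos al ald (cl t)). nra. }
  destruct (min_pos (fun x => vdot (vcross (c1 (cl x)) (Yf (cl x))) (vcross (c1 (cl x)) (Yf (cl x))))) as [my [Hmy Ky]].
  { intros x. apply cp_dot; apply vc_cross; auto using vc_c1, vc_Yf. }
  { intros t Ht. unfold Yf. rewrite ER by apply cl_in. pose proof (sinb_pos (fun s => - al s) (fun s => - ald s) (cl t)). nra. }
  destruct (min_pos (fun x => Rabs (vdot (vcross (c1 (cl x)) (Xf (cl x))) (Yf (cl x))))) as [m2 [Hm2 K2]].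
  { intros x. apply cp_abs, cp_dot; auto using vc_Yf. apply vc_cross; auto using vc_c1, vc_Xf. }
  { intros t Ht. apply Rabs_pos_lt. rewrite triple by apply cl_in.
    pose proof (sinb_pos al ald (cl t)). pose proof (sinb_pos (fun s => - al s) (fun s => - ald s) (cl t)).
    pose proof (sin_al _ (cl_in t)) as [S1 S2].
    repeat apply Rmult_integral_contrapositive_currified; lra. }
  exists (Rmin mx my), m2. split; [apply Rmin_pos; auto|]. split; auto.
  intros t Ht. pose proof (Kx t Ht). pose proof (Ky t Ht). pose proof (K2 t Ht).
  unfold cl in *. rewrite clamp_id in * by auto.
  pose proof (Rmin_l mx my). pose proof (Rmin_r mx my). repeat split; lra.
Qed.

Lemma unif f : (forall x, continuity_pt f x) -> forall eps, 0 < eps -> exists rho, 0 < rho /\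
  forall t t', inI a b t -> inI a b t' -> Rabs (t' - t) < rho -> Rabs (f t' - f t) < eps.
Proof.
  intros Hc eps He. destruct (Heine f (fun x => a <= x <= b) (compact_P3 a b) (fun x _ => Hc x) (mkposreal eps He)) as [d Hd].
  exists d; split; [apply cond_pos|]. intros t t' Ht Ht' H. apply (Hd t' t); auto.
Qed.

Definition vdiff (u w : V3) : V3 := mkV3 (vx u - vx w) (vy u - vy w) (vz u - vz w).

Lemma unifV F : (forall x, vc F x) -> forall th, 0 < th -> exists rho, 0 < rho /\
  forall t t', inI a b t -> inI a b t' -> Rabs (t' - t) < rho -> N1 (vdiff (F t') (F t)) <= th.
Proof.
  intros Hc th Hth.
  destruct (unif (fun t => vx (F t)) (fun x => proj1 (Hc x)) (th/3)) as [r1 [Hr1 K1]]; [lra|].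
  destruct (unif (fun t => vy (F t)) (fun x => proj1 (proj2 (Hc x))) (th/3)) as [r2 [Hr2 K2]]; [lra|].
  destruct (unif (fun t => vz (F t)) (fun x => proj2 (proj2 (Hc x))) (th/3)) as [r3 [Hr3 K3]]; [lra|].
  exists (Rmin r1 (Rmin r2 r3)). split; [repeat apply Rmin_pos; auto|].
  intros t t' Ht Ht' H. pose proof (Rmin_l r1 (Rmin r2 r3)). pose proof (Rmin_r r1 (Rmin r2 r3)).
  pose proof (Rmin_l r2 r3). pose proof (Rmin_r r2 r3).
  unfold N1, vdiff; simpl.
  pose proof (K1 t t' Ht Ht' ltac:(lra)). pose proof (K2 t t' Ht Ht' ltac:(lra)). pose proof (K3 t t' Ht Ht' ltac:(lra)). lra.
Qed.

Lemma taylor f f' : deriv_on a b f f' -> (forall x, continuity_pt (fun s => f' (cl s)) x) ->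
  forall eps, 0 < eps -> exists rho, 0 < rho /\ forall t t', inI a b t -> inI a b t' -> Rabs (t' - t) < rho ->
  Rabs (f t' - f t - (t' - t) * f' t) <= eps * Rabs (t' - t).
Proof.
  intros Hd Hc eps He. destruct (unif _ Hc eps He) as [r [Hr K]].
  exists r; split; auto. intros t t' Ht Ht' Htt.
  destruct (MVT_gen (fun s => f (cl s)) t t' (fun s => f' (cl s))) as [z [Hz Ez]].
  - intros x Hx. apply is_derive_Reals.
    assert (Hxab : a < x < b).
    { unfold inI in *. pose proof (Rmin_glb_lt t t' x). pose proof (Rmax_lub_lt t t' x).
      unfold Rmin, Rmax in *; destruct Rle_dec; lra. }
    intros e He'. destruct (Hd x ltac:(unfold inI; lra) e He') as [d [Hd0 Kd]].
    assert (Hp : 0 < Rmin d (Rmin (x - a) (b - x))) by (repeat apply Rmin_pos; lra).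
    exists (mkposreal _ Hp). intros h Hh0 Hh. simpl in Hh.
    pose proof (Rmin_l d (Rmin (x - a) (b - x))). pose proof (Rmin_r d (Rmin (x - a) (b - x))).
    pose proof (Rmin_l (x - a) (b - x)). pose proof (Rmin_r (x - a) (b - x)).
    assert (Hxh : inI a b (x + h)) by (unfold inI; apply Rabs_lt_between in Hh; lra).
    unfold cl. rewrite !clamp_id; auto; try (unfold inI; lra).
    apply Kd; auto; lra.
  - intros x Hx. exact (deriv_cont a b _ _ Hab' Hd x).
  - unfold cl in Ez. rewrite !clamp_id in Ez by auto.
    assert (Hzi : inI a b z).
    { unfold inI in *. unfold Rmin, Rmax in Hz; destruct Rle_dec; lra. }
    rewrite clamp_id in Ez by auto.
    assert (Hzt : Rabs (z - t) < r).
    { apply Rle_lt_trans with (Rabs (t' - t)); auto. unfold Rmin, Rmax in Hz; destruct Rle_dec; unfold Rabs; repeat destruct Rcase_abs; lra. }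
    pose proof (K t z Ht Hzi Hzt) as Kz. unfold cl in Kz. rewrite !clamp_id in Kz by auto.
    rewrite Ez. replace (f' z * (t' - t) - (t' - t) * f' t) with ((t' - t) * (f' z - f' t)) by ring.
    rewrite Rabs_mult, (Rmult_comm eps). apply Rmult_le_compat_l; [apply Rabs_pos| lra].
Qed.

Definition pp (u : R) : R := (u + Rabs u) / 2.
Lemma pp_nonneg u : 0 <= pp u.
Proof. unfold pp, Rabs; destruct Rcase_abs; lra. Qed.
Lemma pp_lip u w : pp u <= pp w + Rabs (u - w).
Proof. unfold pp, Rabs; repeat destruct Rcase_abs; lra. Qed.
Lemma pp_pos u : 0 < u -> 0 < pp u.
Proof. unfold pp, Rabs; destruct Rcase_abs; lra. Qed.
Lemma pp_zero u : u <= 0 -> pp u = 0.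
Proof. unfold pp, Rabs; destruct Rcase_abs; lra. Qed.

Lemma cp_N1diff F G x : vc F x -> vc G x -> continuity_pt (fun s => N1 (vdiff (F s) (G s))) x.
Proof.
  intros [? [? ?]] [? [? ?]]. unfold N1, vdiff; simpl.
  repeat apply cp_plus; apply cp_abs; apply cp_minus; auto.
Qed.

Lemma vc_const (u : V3) x : vc (fun _ => u) x.
Proof. repeat split; apply cp_const. Qed.

Lemma N1_tri u v w : N1 (vdiff u w) <= N1 (vdiff u v) + N1 (vdiff v w).
Proof.
  unfold N1, vdiff; simpl.
  pose proof (Rabs_triang (vx u - vx v) (vx v - vx w)). pose proof (Rabs_triang (vy u - vy v) (vy v - vy w)).
  pose proof (Rabs_triang (vz u - vz v) (vz v - vz w)).
  replace (vx u - vx v + (vx v - vx w)) with (vx u - vx w) in * by ring.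
  replace (vy u - vy v + (vy v - vy w)) with (vy u - vy w) in * by ring.
  replace (vz u - vz v + (vz v - vz w)) with (vz u - vz w) in * by ring. lra.
Qed.
Lemma N1_sym u w : N1 (vdiff u w) = N1 (vdiff w u).
Proof. unfold N1, vdiff; simpl. rewrite (Rabs_minus_sym (vx u)), (Rabs_minus_sym (vy u)), (Rabs_minus_sym (vz u)). auto. Qed.

Lemma N1_neq u w : u <> w -> 0 < N1 (vdiff u w).
Proof.
  intros Hne. pose proof (N1_pos (vdiff u w)). destruct (Rlt_dec 0 (N1 (vdiff u w))) as [|Hn]; auto.
  exfalso. apply Hne. unfold N1, vdiff in *; simpl in *.
  pose proof (Rabs_pos (vx u - vx w)). pose proof (Rabs_pos (vy u - vy w)). pose proof (Rabs_pos (vz u - vz w)).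
  assert (Rabs (vx u - vx w) = 0) by lra. assert (Rabs (vy u - vy w) = 0) by lra. assert (Rabs (vz u - vz w) = 0) by lra.
  apply Rabs_eq_0 in H3. apply Rabs_eq_0 in H4. apply Rabs_eq_0 in H5.
  destruct u, w; simpl in *. f_equal; lra.
Qed.

Lemma far rho : 0 < rho -> exists del, 0 < del /\ forall t t', inI a b t -> inI a b t' -> rho <= Rabs (t - t') ->
  del <= N1 (vdiff (c t) (c t')).
Proof.
  intros Hr.
  set (C := fun s => c (cl s)).
  set (d := fun t t' => N1 (vdiff (C t) (C t')) + pp (rho - Rabs (t - t'))).
  assert (Hdc : forall t x, continuity_pt (d t) x).
  { intros t x. unfold d. apply cp_plus.
    - apply cp_N1diff. apply vc_const. apply vc_c.
    - unfold pp. apply cp_mult; [|apply cp_const]. apply cp_plus.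
      + apply cp_minus; [apply cp_const|]. apply cp_abs, cp_minus; [apply cp_const| apply continuity_pt_id].
      + apply cp_abs. apply cp_minus; [apply cp_const|]. apply cp_abs, cp_minus; [apply cp_const| apply continuity_pt_id]. }
  assert (Hex : forall t, exists M, (forall t', a <= t' <= b -> d t M <= d t t') /\ a <= M <= b).
  { intros t. apply continuity_ab_min; auto. }
  set (Mt := fun t => epsilon (inhabits 0) (fun M => (forall t', a <= t' <= b -> d t M <= d t t') /\ a <= M <= b)).
  assert (HM : forall t, (forall t', a <= t' <= b -> d t (Mt t) <= d t t') /\ a <= Mt t <= b).
  { intros t. unfold Mt. apply (epsilon_spec (inhabits 0) (fun M => (forall t', a <= t' <= b -> d t M <= d t t') /\ a <= M <= b)). apply Hex. }
  set (mt := fun t => d t (Mt t)).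
  assert (Hlip : forall t1 t2, mt t1 <= mt t2 + (N1 (vdiff (C t1) (C t2)) + Rabs (t1 - t2))).
  { intros t1 t2. unfold mt. destruct (HM t1) as [H1 _]. destruct (HM t2) as [_ H2].
    apply Rle_trans with (d t1 (Mt t2)); [apply H1; auto|].
    unfold d. pose proof (N1_tri (C t1) (C t2) (C (Mt t2))).
    pose proof (pp_lip (rho - Rabs (t1 - Mt t2)) (rho - Rabs (t2 - Mt t2))).
    assert (Rabs (rho - Rabs (t1 - Mt t2) - (rho - Rabs (t2 - Mt t2))) <= Rabs (t1 - t2)).
    { unfold Rabs; repeat destruct Rcase_abs; lra. }
    lra. }
  assert (Hmc : forall x, continuity_pt mt x).
  { intros x. apply cp_eps. intros eps He.
    assert (Lc : continuity_pt (fun y => N1 (vdiff (C y) (C x)) + Rabs (y - x)) x).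
    { apply cp_plus. apply cp_N1diff. apply vc_c. apply vc_const. apply cp_abs, cp_minus; [apply continuity_pt_id|apply cp_const]. }
    destruct (cp_eps_inv _ _ Lc eps He) as [del [Hdel K]].
    exists del; split; auto. intros y Hy. pose proof (K y Hy) as Ky.
    unfold vdiff at 2 in Ky. rewrite !Rminus_diag in Ky. unfold N1 at 2 in Ky; simpl in Ky. rewrite !Rabs_R0 in Ky.
    pose proof (N1_pos (vdiff (C y) (C x))). rewrite Rabs_pos_eq in Ky by (pose proof (Rabs_pos (y - x)); lra).
    pose proof (Hlip y x). pose proof (Hlip x y). rewrite N1_sym in H1. rewrite Rabs_minus_sym in H1.
    apply Rabs_lt_between'. split; lra. }
  destruct (min_pos mt Hmc) as [del [Hdel K]].
  { intros t Ht. unfold mt. destruct (HM t) as [_ HMi]. unfold d.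
    destruct (Rlt_dec (Rabs (t - Mt t)) rho).
    - pose proof (N1_pos (vdiff (C t) (C (Mt t)))). pose proof (pp_pos (rho - Rabs (t - Mt t)) ltac:(lra)). lra.
    - pose proof (pp_nonneg (rho - Rabs (t - Mt t))).
      assert (C t <> C (Mt t)).
      { unfold C, cl. rewrite !clamp_id by auto. intros E. apply Hemb in E; auto.
        rewrite <- E, Rminus_diag, Rabs_R0 in n. lra. }
      pose proof (N1_neq _ _ H0). lra. }
  exists del; split; auto. intros t t' Ht Ht' Hrt.
  pose proof (K t Ht) as G1. unfold mt in G1. destruct (HM t) as [H1 _]. pose proof (H1 t' Ht') as G2.
  unfold d in G2. rewrite (pp_zero (rho - Rabs (t - t'))) in G2 by lra. unfold C, cl in G2. rewrite (clamp_id a b t') in G2 by auto. unfold d, C, cl in G1. pose proof (pp_nonneg (rho - Rabs (t - Mt t))). rewrite (clamp_id a b t) in G1, G2 by auto. lra.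
Qed.

Lemma core (U W : R -> V3) t t' v v' eps th rho del :
  inI a b t -> inI a b t' -> Rabs v < eps -> Rabs v' < eps -> 6 * eps <= del ->
  cb 1 (U t) -> cb 1 (W t') ->
  (forall t t', inI a b t -> inI a b t' -> rho <= Rabs (t - t') -> del <= N1 (vdiff (c t) (c t'))) ->
  (Rabs (t' - t) < rho -> N1 (vdiff (vdiff (c t') (c t)) (vscale (t' - t) (c1 t))) <= th * Rabs (t' - t)) ->
  (Rabs (t' - t) < rho -> N1 (vdiff (W t') (W t)) <= th) ->
  vadd (c t) (vscale v (U t)) = vadd (c t') (vscale v' (W t')) ->
  N1 (lin3 (t' - t) (c1 t) v' (W t) v (U t)) <= th * (Rabs (t' - t) + Rabs v').
Proof.
  intros Ht Ht' Hv Hv' Hed HU HW Hfar Htay Hunif Heq.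
  assert (Ex := f_equal vx Heq). assert (Ey := f_equal vy Heq). assert (Ez := f_equal vz Heq).
  simpl in Ex, Ey, Ez.
  destruct (Rlt_dec (Rabs (t' - t)) rho) as [Hr|Hr].
  - pose proof (Htay Hr) as T. pose proof (Hunif Hr) as W1.
    unfold N1, lin3, vdiff, vscale in *; simpl in *.
    set (p := v') in *.
    assert (A : forall yx rc rw, yx = - rc - p * rw -> Rabs yx <= Rabs rc + Rabs p * Rabs rw).
    { intros yx rc rw ->. rewrite <- Rabs_mult. unfold Rminus. eapply Rle_trans; [apply Rabs_triang|].
      rewrite !Rabs_Ropp. lra. }
    pose proof (A (t' - t) (vx (c t') - vx (c t) - (t' - t) * vx (c1 t)) (vx (W t') - vx (W t))) as A1.
    clear A.
    match goal with |- Rabs ?X1 + Rabs ?X2 + Rabs ?X3 <= _ =>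
      assert (B1 : Rabs X1 <= Rabs (vx (c t') - vx (c t) - (t' - t) * vx (c1 t)) + Rabs p * Rabs (vx (W t') - vx (W t)));
      [| assert (B2 : Rabs X2 <= Rabs (vy (c t') - vy (c t) - (t' - t) * vy (c1 t)) + Rabs p * Rabs (vy (W t') - vy (W t)));
      [| assert (B3 : Rabs X3 <= Rabs (vz (c t') - vz (c t) - (t' - t) * vz (c1 t)) + Rabs p * Rabs (vz (W t') - vz (W t)))]] end.
    + rewrite <- Rabs_mult. replace (_ * vx (c1 t) + _ - _) with (- (vx (c t') - vx (c t) - (t' - t) * vx (c1 t)) - p * (vx (W t') - vx (W t))) by lra.
      unfold Rminus at 1. eapply Rle_trans; [apply Rabs_triang|]. rewrite !Rabs_Ropp. apply Rle_refl.
    + rewrite <- Rabs_mult. replace (_ * vy (c1 t) + _ - _) with (- (vy (c t') - vy (c t) - (t' - t) * vy (c1 t)) - p * (vy (W t') - vy (W t))) by lra.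
      unfold Rminus at 1. eapply Rle_trans; [apply Rabs_triang|]. rewrite !Rabs_Ropp. apply Rle_refl.
    + rewrite <- Rabs_mult. replace (_ * vz (c1 t) + _ - _) with (- (vz (c t') - vz (c t) - (t' - t) * vz (c1 t)) - p * (vz (W t') - vz (W t))) by lra.
      unfold Rminus at 1. eapply Rle_trans; [apply Rabs_triang|]. rewrite !Rabs_Ropp. apply Rle_refl.
    + assert (Rabs p * (Rabs (vx (W t') - vx (W t)) + Rabs (vy (W t') - vy (W t)) + Rabs (vz (W t') - vz (W t))) <= Rabs p * th)
        by (apply Rmult_le_compat_l; [apply Rabs_pos|lra]).
      lra.
  - exfalso. assert (Hr' : rho <= Rabs (t - t')) by (rewrite Rabs_minus_sym; lra).
    pose proof (Hfar t t' Ht Ht' Hr') as F.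
    unfold N1, vdiff in F; simpl in F.
    destruct HU as [U1 [U2 U3]]. destruct HW as [W1 [W2 W3]].
    assert (G : forall cu cw u w, cu + v * u = cw + v' * w -> Rabs u <= 1 -> Rabs w <= 1 -> Rabs (cu - cw) <= Rabs v + Rabs v').
    { intros cu cw u w E Hu Hw. replace (cu - cw) with (v' * w - v * u) by lra.
      unfold Rminus. eapply Rle_trans; [apply Rabs_triang|]. rewrite Rabs_Ropp, !Rabs_mult.
      pose proof (Rabs_pos v); pose proof (Rabs_pos v'); pose proof (Rabs_pos u); pose proof (Rabs_pos w). nra. }
    pose proof (G _ _ _ _ Ex U1 W1). pose proof (G _ _ _ _ Ey U2 W2). pose proof (G _ _ _ _ Ez U3 W3). lra.
Qed.

Lemma triple_anti u x y : vdot (vcross u y) x = - vdot (vcross u x) y.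
Proof. destruct u, x, y; unfold vdot, vcross; simpl; ring. Qed.

Lemma main_sec : exists eps0, 0 < eps0 /\ forall eps, 0 < eps < eps0 ->
  forall t v, ~ S_set a b eps c c1 c2 nd al ald t v.
Proof.
  destruct lowers as [m1 [m2 [Hm1 [Hm2 Hlow]]]].
  set (th := Rmin (m2 / 8) (m1 / (2 * (m1 + 8)))).
  assert (Hth : 0 < th) by (unfold th; apply Rmin_pos; apply Rdiv_lt_0_compat; lra).
  assert (Hth1 : 4 * th < m2) by (unfold th; pose proof (Rmin_l (m2 / 8) (m1 / (2 * (m1 + 8)))); lra).
  assert (Hth2 : (m1 + 8) * th < m1).
  { unfold th; pose proof (Rmin_r (m2 / 8) (m1 / (2 * (m1 + 8)))).
    apply Rle_lt_trans with ((m1 + 8) * (m1 / (2 * (m1 + 8)))); [apply Rmult_le_compat_l; lra|].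
    replace ((m1 + 8) * (m1 / (2 * (m1 + 8)))) with (m1 / 2) by (field; lra). lra. }
  destruct Hc1 as [Cx [Cy Cz]].
  destruct (taylor _ _ Cx (fun x => proj1 (vc_c1 x)) (th / 3)) as [r1 [Hr1 T1]]; [lra|].
  destruct (taylor _ _ Cy (fun x => proj1 (proj2 (vc_c1 x))) (th / 3)) as [r2 [Hr2 T2]]; [lra|].
  destruct (taylor _ _ Cz (fun x => proj2 (proj2 (vc_c1 x))) (th / 3)) as [r3 [Hr3 T3]]; [lra|].
  destruct (unifV _ vc_Xf th Hth) as [r4 [Hr4 T4]].
  destruct (unifV _ vc_Yf th Hth) as [r5 [Hr5 T5]].
  set (rho := Rmin (Rmin r1 r2) (Rmin r3 (Rmin r4 r5))).
  assert (Hrho : 0 < rho) by (unfold rho; repeat apply Rmin_pos; auto).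
  assert (R1 : rho <= r1 /\ rho <= r2 /\ rho <= r3 /\ rho <= r4 /\ rho <= r5).
  { unfold rho. pose proof (Rmin_l (Rmin r1 r2) (Rmin r3 (Rmin r4 r5))). pose proof (Rmin_r (Rmin r1 r2) (Rmin r3 (Rmin r4 r5))).
    pose proof (Rmin_l r1 r2). pose proof (Rmin_r r1 r2). pose proof (Rmin_l r3 (Rmin r4 r5)). pose proof (Rmin_r r3 (Rmin r4 r5)).
    pose proof (Rmin_l r4 r5). pose proof (Rmin_r r4 r5). lra. }
  destruct (far rho Hrho) as [del [Hdel Hfar]].
  exists (del / 6). split; [lra|]. intros eps [He1 He2] t v [[Ht Hv] [t' [v' [[Ht' Hv'] [Hne Heq]]]]].
  assert (Hva : Rabs v < eps) by (apply Rabs_def1; lra).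
  assert (Hva' : Rabs v' < eps) by (apply Rabs_def1; lra).
  assert (Hed : 6 * eps <= del) by lra.
  assert (Htay : Rabs (t' - t) < rho -> N1 (vdiff (vdiff (c t') (c t)) (vscale (t' - t) (c1 t))) <= th * Rabs (t' - t)).
  { intros Hr. unfold N1, vdiff, vscale; simpl.
    pose proof (T1 t t' Ht Ht' ltac:(lra)). pose proof (T2 t t' Ht Ht' ltac:(lra)). pose proof (T3 t t' Ht Ht' ltac:(lra)). lra. }
  assert (HuX : Rabs (t' - t) < rho -> N1 (vdiff (Xf t') (Xf t)) <= th).
  { intros Hr. pose proof (T4 t t' Ht Ht' ltac:(lra)) as K. unfold cl in K. rewrite !clamp_id in K by auto. exact K. }
  assert (HuY : Rabs (t' - t) < rho -> N1 (vdiff (Yf t') (Yf t)) <= th).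
  { intros Hr. pose proof (T5 t t' Ht Ht' ltac:(lra)) as K. unfold cl in K. rewrite !clamp_id in K by auto. exact K. }
  assert (cbE : cb 1 (c1 t)) by (apply unit_cb, ee; auto).
  assert (cbX : forall s, inI a b s -> cb 1 (Xf s)) by (intros; apply unit_cb; unfold Xf; apply RR; auto).
  assert (cbY : forall s, inI a b s -> cb 1 (Yf s)) by (intros; apply unit_cb; unfold Yf; apply RR; auto).
  destruct (Hlow t Ht) as [L1 [L2 L3]].
  assert (EX : Rabs (vdot (c1 t) (Xf t)) <= 1) by (unfold Xf; rewrite eR by auto; apply Rabs_le, COS_bound).
  assert (EY : Rabs (vdot (c1 t) (Yf t)) <= 1) by (unfold Yf; rewrite eR by auto; apply Rabs_le, COS_bound).
  unfold phi_map, psi_map in Heq.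
  destruct (Rle_dec 0 v) as [Pv|Pv]; destruct (Rle_dec 0 v') as [Pv'|Pv'].
  -
    pose proof (core Xf Yf t t' v v' eps th rho del Ht Ht' Hva Hva' Hed (cbX t Ht) (cbY t' Ht') Hfar Htay HuY Heq) as N.
    destruct (transversal (c1 t) (Xf t) (Yf t) (t' - t) v' v m2 th cbE (cbX t Ht) (cbY t Ht) L3 Hm2 ltac:(lra) Hth1 N) as [A [B C]].
    apply Hne. f_equal; lra.
  -
    pose proof (core Xf Xf t t' v v' eps th rho del Ht Ht' Hva Hva' Hed (cbX t Ht) (cbX t' Ht') Hfar Htay HuX Heq) as N.
    apply (embedding (c1 t) (Xf t) (t' - t) v' v m1 th cbE (cbX t Ht) (ee t Ht) EX L1 Hm1 ltac:(lra) Hth2 ltac:(lra) N).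
  -
    pose proof (core Yf Yf t t' v v' eps th rho del Ht Ht' Hva Hva' Hed (cbY t Ht) (cbY t' Ht') Hfar Htay HuY Heq) as N.
    apply (embedding (c1 t) (Yf t) (t' - t) v' v m1 th cbE (cbY t Ht) (ee t Ht) EY L2 Hm1 ltac:(lra) Hth2 ltac:(lra) N).
  -
    pose proof (core Yf Xf t t' v v' eps th rho del Ht Ht' Hva Hva' Hed (cbY t Ht) (cbX t' Ht') Hfar Htay HuX Heq) as N.
    assert (L3' : m2 <= Rabs (vdot (vcross (c1 t) (Yf t)) (Xf t))) by (rewrite triple_anti, Rabs_Ropp; auto).
    destruct (transversal (c1 t) (Yf t) (Xf t) (t' - t) v' v m2 th cbE (cbY t Ht) (cbX t Ht) L3' Hm2 ltac:(lra) Hth1 N) as [A [B C]].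
    apply Hne. f_equal; lra.
Qed.
End Main.

Lemma chain_c a b g g1 g2 (D : nat -> R -> R) : a < b -> (forall t, inI a b t -> D O t = g t) ->
  (forall k, deriv_on a b (D k) (D (S k))) -> deriv_on a b g g1 -> deriv_on a b g1 g2 ->
  deriv_on a b g2 (D 3%nat) /\ deriv_on a b (D 3%nat) (D 4%nat).
Proof.
  intros Hab H0 HS H1 H2.
  assert (E1 : forall t, inI a b t -> g1 t = D 1%nat t).
  { intros t Ht. apply (deriv_unique a b (D O)); auto. apply deriv_ext with g; auto. intros; symmetry; auto. }
  assert (E2 : forall t, inI a b t -> g2 t = D 2%nat t).
  { intros t Ht. apply (deriv_unique a b (D 1%nat)); auto. apply deriv_ext with g1; auto. }
  split; auto. apply deriv_ext with (D 2%nat); auto. intros; symmetry; auto.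
Qed.

Lemma chain_a a b g g1 (D : nat -> R -> R) : a < b -> (forall t, inI a b t -> D O t = g t) ->
  (forall k, deriv_on a b (D k) (D (S k))) -> deriv_on a b g g1 -> deriv_on a b g1 (D 2%nat).
Proof.
  intros Hab H0 HS H1.
  assert (E1 : forall t, inI a b t -> g1 t = D 1%nat t).
  { intros t Ht. apply (deriv_unique a b (D O)); auto. apply deriv_ext with g; auto. intros; symmetry; auto. }
  apply deriv_ext with (D 1%nat); auto. intros; symmetry; auto.
Qed.

Theorem lemma1p1
  (a b : R) (c c1 c2 nd : R -> V3) (al ald : R -> R)
  (Hab : a < b)
  (* c is C^infinity on I, with c' = c1, c'' = c2 *)
  (Hc_smooth : vsmooth_on a b c)
  (Hc1 : vderiv_on a b c c1)
  (Hc2 : vderiv_on a b c1 c2)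
  (* arc-length parametrization *)
  (Harc : forall t, inI a b t -> vnorm (c1 t) = 1)
  (* curvature kappa = |c''| > 0 *)
  (Hkappa : forall t, inI a b t -> 0 < curvature c2 t)
  (* nd = n', used to define the torsion tau = n' . b *)
  (Hnd : vderiv_on a b (frenet_n c2) nd)
  (* embedded: c is injective on I *)
  (Hemb : forall t t', inI a b t -> inI a b t' -> c t = c t' -> t = t')
  (* first angular function alpha: C^infinity, 0 < |alpha| < pi/2, ald = alpha' *)
  (Hal_smooth : smooth_on a b al)
  (Hald : deriv_on a b al ald)
  (Hal_range : forall t, inI a b t -> 0 < Rabs (al t) < PI / 2) :
  exists eps0, 0 < eps0 /\
    forall eps, 0 < eps < eps0 ->
      forall t v, ~ interior_point (S_set a b eps c c1 c2 nd al ald) t v.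
Proof.
  destruct Hc_smooth as [[Dx [Dx0 DxS]] [[Dy [Dy0 DyS]] [Dz [Dz0 DzS]]]].
  destruct Hal_smooth as [Da [Da0 DaS]].
  pose proof Hc1 as [C1x [C1y C1z]]. pose proof Hc2 as [C2x [C2y C2z]].
  destruct (chain_c a b _ _ _ Dx Hab Dx0 DxS C1x C2x) as [X3 X4].
  destruct (chain_c a b _ _ _ Dy Hab Dy0 DyS C1y C2y) as [Y3 Y4].
  destruct (chain_c a b _ _ _ Dz Hab Dz0 DzS C1z C2z) as [Z3 Z4].
  pose proof (chain_a a b _ _ Da Hab Da0 DaS Hald) as A2.
  destruct (main_sec a b c c1 c2 nd al ald (Dx 3%nat) (Dy 3%nat) (Dz 3%nat) (Dx 4%nat) (Dy 4%nat) (Dz 4%nat) (Da 2%nat)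
     Hab Hc1 Hc2 X3 Y3 Z3 X4 Y4 Z4 Harc Hkappa Hnd Hemb Hald A2 Hal_range) as [eps0 [He0 K]].
  exists eps0; split; auto. intros eps Heps t v [r [Hr Hin]].
  apply (K eps Heps t v). apply Hin. replace (t - t) with 0 by ring. replace (v - v) with 0 by ring.
  replace (0 ^ 2 + 0 ^ 2) with 0 by ring. rewrite sqrt_0. exact Hr.
Qed.
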